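(* There exists an instance of the throughput-constrained online resource allocation problem (a fixed choice of all primitives, with the horizon $T$ ranging over multiples of $K$) such that every online policy $\pi$ that has myopic vanishing regret satisfies $\mathbb E[\textsc{Reg}]=\mathbb E[V^\pi[\omega]-V^{\textsc{off}}[\omega]]=\Omega(T)$.
   Context: Model. There are $m$ resources and $n$ arrival types. Type $j\in[n]$ has an assignment cost vector $c_j\in\mathbb R^m$ and a set $\mathcal S_j\subseteq[m]$ of allowed resources; $\max_{i,j}|c_{ji}|<\infty$. The horizon has $T$ periods, partitioned into $K=\Theta(1)$ epochs, $T$ a multiple of $K$; epoch $k$ consists of the periods $\mathcal T_k=\{(k-1)T/K+1,\dots,kT/K\}$. In each period $t$ one arrival of type $j^t$ occurs, $j^1,\dots,j^T$ i.i.d. with $\mathbb P(j^t=j)=p_j$ ($p$ not scaling with $T$, unknown to the decision-maker). Write $\omega=(j^t)_{t\le T}$, $\omega_k=(j^t)_{t\in\mathcal T_k}$, $\Lambda_j(t_1:t_2)=\sum_{t_1<\tau\le t_2}\mathbf 1\{j^\tau=j\}$. In period $t$ the decision-maker observes $j^t$ and either rejects the arrival (cost $0$) or assigns it to one resource $i\in\mathcal S_{j^t}$ (cost $c_{j^ti}$). For a policy $\pi$, $Z^\pi_{ji}(t)$ counts type-$j$ arrivals assigned to $i$ in periods $1..t$, $Z^\pi_i=\sum_jZ^\pi_{ji}$, $Z(t_1:t_2)=Z(t_2)-Z(t_1)$. Each epoch $k$ and resource $i$ has a target $\rho_{ki}\in[0,1]$ and a convex $L$-Lipschitz deviation cost $g_{ki}:[0,1]\to\mathbb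 R_{\ge0}$ with $g_{ki}(\rho_{ki})=0$. The cost of $\pi$ is $V^\pi[\omega]=\sum_{j,i}c_{ji}Z^\pi_{ji}(T)+\frac TK\sum_{k\in[K]}\sum_{i}k\,g_{ki}\big(Z^\pi_i(kT/K)/(kT/K)\big)$; $V^{\textsc{off}}[\omega]$ is the minimum of this expression over nonnegative integer assignments satisfying $\sum_iZ_{ji}((k-1)T/K:kT/K)\le\Lambda_j((k-1)T/K:kT/K)$ for all $j,k$ and $Z_{ji}(T)=0$ for $i\notin\mathcal S_j$. Myopic notions. For epoch $k$ and current aggregate consumption $z\in\mathbb N^m$, the myopic offline optimum $V^{\textsc{myo-off}}_k[\omega_k\mid z]$ is the minimum, over nonnegative integers $Z_{ji}((k-1)T/K:kT/K)$ with $\sum_iZ_{ji}((k-1)T/K:kT/K)\le\Lambda_j((k-1)T/K:kT/K)$ and $Z_{ji}=0$ for $i\notin\mathcal S_j$, of $$\sum_{j,i}c_{ji}Z_{ji}\big(\tfrac{(k-1)T}K:\tfrac{kT}K\big)+\frac{kT}K\sum_ig_{ki}\Big(\frac{z_i+Z_i((k-1)T/K:kT/K)}{kT/K}\Big).$$ For a policy $\pi$, $V^\pi_k[\omega_k\mid z]$ denotes the quantity in the last display evaluated at $\pi$'s own assignments in epoch $k$ with $z=Z^\pi((k-1)T/K)$ (the assignment and epoch-$k$ deviation costs incurred during epoch $k$). A policy $\pi$ has myopic vanishing regret if there is $\alpha\in[0,1)$ such that for all $k\in[K]$ and all values of $Z^\pi((k-1)T/K)\in\mathbb N^m$, $\mathbb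 E\big[V^\pi_k[\omega_k\mid Z^\pi((k-1)T/K)]-V^{\textsc{myo-off}}_k[\omega_k\mid Z^\pi((k-1)T/K)]\ \big|\ Z^\pi((k-1)T/K)\big]=O(T^\alpha)$. *)

(* Defs.v *)
From HB Require Import structures.
From mathcomp Require Import all_boot all_order all_algebra.
From mathcomp Require Import all_classical all_reals all_analysis.
Set Implicit Arguments.
Unset Strict Implicit.
Unset Printing Implicit Defensive.
Import Order.TTheory GRing.Theory Num.Theory.
Local Open Scope ring_scope.

(* Conventions: resources are 'I_m, arrival types 'I_n, epochs 'I_K where
   the ordinal k : 'I_K is the paper's epoch k+1.  Periods are 0-indexed:
   period t of the paper is index t-1 : 'I_T.  An action is an
   [option 'I_m]: None = reject, Some i = assign to resource i.
   A (possibly randomized, non-anticipating) online policy is a family,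
   indexed by the horizon T, of behavioural decision rules: given the
   past history (list of (arrival type, action) pairs of the previous
   periods) and the current arrival type, it gives the probability of
   each action. *)

Section Model.
Variables (R : realType) (m n K : nat).
Variables (c : 'I_n -> 'I_m -> R) (S : 'I_n -> 'I_m -> bool) (p : 'I_n -> R).
Variables (g : 'I_K -> 'I_m -> R -> R).

Definition policy := nat -> seq ('I_n * option 'I_m) -> 'I_n -> option 'I_m -> R.

Definition traj (T : nat) := {ffun 'I_T -> 'I_n * option 'I_m}.

Definition valid_policy (pol : policy) : Prop :=
  forall (T : nat) (h : seq ('I_n * option 'I_m)) (j : 'I_n),
    (K %| T)%N ->
    (forall a, 0 <= pol T h j a) /\
    \sum_(a : option 'I_m) pol T h j a = 1 /\
    (forall i, ~~ S j i -> pol T h j (Some i) = 0).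

Section Horizon.
Variable T : nat.

Definition history (w : traj T) (t : nat) : seq ('I_n * option 'I_m) :=
  map w (seq.filter (fun i : 'I_T => (i < t)%N) (enum 'I_T)).

Definition prob (pol : policy) (w : traj T) : R :=
  \prod_(t < T) (p (w t).1 * pol T (history w t) (w t).1 (w t).2).

Definition elen : nat := (T %/ K)%N.
Definition eend (k : 'I_K) : nat := (k.+1 * elen)%N.
Definition estart (k : 'I_K) : nat := (k * elen)%N.

Definition Zcons (w : traj T) (i : 'I_m) (t : nat) : nat :=
  (\sum_(s < T | (s < t)%N && ((w s).2 == Some i)) 1)%N.

Definition Lam (w : traj T) (k : 'I_K) (j : 'I_n) : nat :=
  (\sum_(s < T | (estart k <= s < eend k)%N && ((w s).1 == j)) 1)%N.

Definition step_cost (x : 'I_n * option 'I_m) : R :=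
  if x.2 is Some i then c x.1 i else 0.

Definition assign_cost (w : traj T) (a b : nat) : R :=
  \sum_(s < T | (a <= s < b)%N) step_cost (w s).

Definition Vpi (w : traj T) : R :=
  assign_cost w 0 T +
  (T%:R / K%:R) * \sum_(k < K) \sum_(i < m)
     k.+1%:R * g k i ((Zcons w i (eend k))%:R / (eend k)%:R).

(* offline: epoch-wise assignment counts X(k,j,i) (bounded by T, which
   loses nothing since X(k,j,i) <= Lambda_j <= T) *)
Definition off_feasible (w : traj T) (X : {ffun 'I_K * 'I_n * 'I_m -> 'I_T.+1}) : bool :=
  [forall k : 'I_K, forall j : 'I_n,
     (\sum_(i < m) (X (k, j, i) : nat) <= Lam w k j)%N] &&
  [forall k : 'I_K, forall j : 'I_n, forall i : 'I_m,
     ~~ S j i ==> ((X (k, j, i) : nat) == 0%N)].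

Definition off_cost (X : {ffun 'I_K * 'I_n * 'I_m -> 'I_T.+1}) : R :=
  \sum_(k < K) \sum_(j < n) \sum_(i < m) c j i * (X (k, j, i) : nat)%:R +
  (T%:R / K%:R) * \sum_(k < K) \sum_(i < m)
     k.+1%:R * g k i
       ((\sum_(k' < K | (k' <= k)%N) \sum_(j < n) (X (k', j, i) : nat))%:R
          / (eend k)%:R).

(* V^off[omega]: minimum of off_cost over feasible X (the zero assignment
   is feasible, so its cost is a valid initial value for the min) *)
Definition Voff (w : traj T) : R :=
  \big[Order.min / off_cost [ffun=> ord0]]_(X | off_feasible w X) off_cost X.

Definition myo_feasible (w : traj T) (k : 'I_K) (Y : {ffun 'I_n * 'I_m -> 'I_T.+1}) : bool :=
  [forall j : 'I_n, (\sum_(i < m) (Y (j, i) : nat) <= Lam w k j)%N] &&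
  [forall j : 'I_n, forall i : 'I_m, ~~ S j i ==> ((Y (j, i) : nat) == 0%N)].

Definition myo_cost (k : 'I_K) (z : 'I_m -> nat) (Y : {ffun 'I_n * 'I_m -> 'I_T.+1}) : R :=
  \sum_(j < n) \sum_(i < m) c j i * (Y (j, i) : nat)%:R +
  (eend k)%:R * \sum_(i < m)
     g k i ((z i + \sum_(j < n) (Y (j, i) : nat))%:R / (eend k)%:R).

Definition Vmyo_off (w : traj T) (k : 'I_K) (z : 'I_m -> nat) : R :=
  \big[Order.min / myo_cost k z [ffun=> ord0]]_(Y | myo_feasible w k Y) myo_cost k z Y.

Definition Vpi_k (w : traj T) (k : 'I_K) : R :=
  assign_cost w (estart k) (eend k) +
  (eend k)%:R * \sum_(i < m) g k i ((Zcons w i (eend k))%:R / (eend k)%:R).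

Definition Zprev (w : traj T) (k : 'I_K) : 'I_m -> nat :=
  fun i => Zcons w i (estart k).

Definition Pz (pol : policy) (k : 'I_K) (z : 'I_m -> nat) : R :=
  \sum_(w : traj T | [forall i, Zprev w k i == z i]) prob pol w.

Definition cond_myo_regret (pol : policy) (k : 'I_K) (z : 'I_m -> nat) : R :=
  (\sum_(w : traj T | [forall i, Zprev w k i == z i])
      prob pol w * (Vpi_k w k - Vmyo_off w k (Zprev w k))) / Pz pol k z.

Definition exp_regret (pol : policy) : R :=
  \sum_(w : traj T) prob pol w * (Vpi w - Voff w).

End Horizon.

Definition myopic_vanishing_regret (pol : policy) : Prop :=
  exists (alpha C : R) (T0 : nat),
    0 <= alpha /\ alpha < 1 /\
    forall T : nat, (K %| T)%N -> (T0 <= T)%N ->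
    forall (k : 'I_K) (z : 'I_m -> nat),
      0 < Pz T pol k z ->
      cond_myo_regret T pol k z <= C * (T%:R `^ alpha).

End Model.

Definition instance_ok (R : realType) (m n K : nat)
    (p : 'I_n -> R) (rho : 'I_K -> 'I_m -> R) (g : 'I_K -> 'I_m -> R -> R)
    (L : R) : Prop :=
  (0 < K)%N /\
  (forall j, 0 <= p j) /\ \sum_(j < n) p j = 1 /\
  (forall k i, 0 <= rho k i <= 1) /\
  0 <= L /\
  (forall k i, g k i (rho k i) = 0) /\
  (forall k i x, 0 <= x <= 1 -> 0 <= g k i x) /\
  (forall k i x y t, 0 <= x <= 1 -> 0 <= y <= 1 -> 0 <= t <= 1 ->
      g k i (t * x + (1 - t) * y) <= t * g k i x + (1 - t) * g k i y) /\
  (forall k i x y, 0 <= x <= 1 -> 0 <= y <= 1 ->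
      `|g k i x - g k i y| <= L * `|x - y|).

(* Main.v *)
Require Import Defs.
From HB Require Import structures.
From mathcomp Require Import all_boot all_order all_algebra.
From mathcomp Require Import all_classical all_reals all_analysis.
Import Order.TTheory GRing.Theory Num.Theory.
Local Open Scope ring_scope.
Set Implicit Arguments. Unset Strict Implicit. Unset Printing Implicit Defensive.
From mathcomp Require Import ring lra.

Section Inst.
Variable R : realType.
Definition c0 : 'I_1 -> 'I_1 -> R := fun _ _ => 0.
Definition S0 : 'I_1 -> 'I_1 -> bool := fun _ _ => true.
Definition p0 : 'I_1 -> R := fun _ => 1.
Definition g0 : 'I_2 -> 'I_1 -> R -> R :=
  fun k _ x => if (k == 0 :> nat) then 1 - x else 2 * x.

Variable T : nat.
Hypothesis HT : (2 %| T)%N.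
Hypothesis Tpos : (0 < T)%N.
Let E := elen 2 T.
Lemma TE : T = (2 * E)%N.
Proof. by rewrite /E /elen mulnC divnK. Qed.
Lemma TR : T%:R / 2%:R = E%:R :> R.
Proof. by rewrite TE natrM mulrC mulKf // pnatr_eq0. Qed.

Lemma Zcons0 (w : traj 1 1 T) i : Zcons w i 0 = 0%N.
Proof. by rewrite /Zcons big_pred0 // => s; rewrite ltn0. Qed.

Lemma Zcons_mono (w : traj 1 1 T) i a b : (a <= b)%N -> (Zcons w i a <= Zcons w i b)%N.
Proof.
move=> ab; rewrite /Zcons big_mkcond [X in (_ <= X)%N]big_mkcond.
apply: leq_sum => s _.
case: (s < a)%N / ltnP => sa /=; last by case: ifP.
by rewrite (leq_trans sa ab).
Qed.

Lemma Lam_eq (w : traj 1 1 T) j : Lam w (ord0 : 'I_2) j = E.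
Proof.
rewrite /Lam /estart /eend /= ?mul0n ?mul1n.
rewrite (eq_bigl (fun s : 'I_T => (s < E)%N)); last first.
  by move=> s; rewrite [j]ord1 [(w s).1]ord1 eqxx andbT.
have ET : (E <= T)%N by rewrite TE leq_pmull.
have := big_nat_widen 0 E T (fun _ => true) (fun _ => 1%N) ET.
rewrite /=.
move=> H; move: (H 0%N addn).
rewrite sum_nat_const_nat subn0 muln1 big_mkord => <- //.
Qed.
Lemma Epos : (0 < E)%N.
Proof. by move: Tpos; rewrite TE muln_gt0. Qed.

Lemma Voff_le (w : traj 1 1 T) : Voff c0 S0 g0 w <= E%:R.
Proof.
apply: le_trans (bigmin_le_id _ _ _ _) _.
rewrite /off_cost big1 ?add0r; last first.
  by move=> k _; rewrite big1 // => j _; rewrite big1 // => i _; rewrite /c0 mul0r.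
rewrite !big_ord_recr !big_ord0 /= !add0r.
rewrite big1; last by move=> k' _; rewrite big1 // => j _; rewrite ffunE.
rewrite big1; last by move=> k' _; rewrite big1 // => j _; rewrite ffunE.
rewrite /g0 /= !mul0r.
by rewrite subr0 !mulr0 addr0 !mulr1 TR.
Qed.
Lemma assign0 (w : traj 1 1 T) a b : assign_cost c0 w a b = 0.
Proof. by rewrite /assign_cost big1 // => s _; rewrite /step_cost; case: (w s).2. Qed.

Lemma Vpi_ge (w : traj 1 1 T) : E%:R + (Zcons w ord0 E)%:R <= Vpi c0 g0 w.
Proof.
rewrite /Vpi assign0 add0r !big_ord_recr !big_ord0 /= !add0r /g0 /=.
have -> : (ord_max : 'I_1) = ord0 by apply: val_inj.
rewrite /eend /= mul1n -/E TR.
have Z12 : (Zcons w ord0 E <= Zcons w ord0 (2 * E))%N by apply: Zcons_mono; rewrite leq_pmull.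
have e0 : (0 : R) < E%:R by rewrite ltr0n Epos.
rewrite natrM.
move: Z12; rewrite -(ler_nat R).
set z1 := (Zcons w ord0 E)%:R; set z2 := (Zcons w ord0 (2 * E))%:R; set e := E%:R.
move=> Z12.
have -> : e * (1 * (1 - z1 / e) + 2 * (2 * (z2 / (2 * e)))) = e - z1 + 2 * z2.
  by field; rewrite gt_eqF.
have : (0 : R) <= z1 by rewrite /z1 ler0n.
lra.
Qed.
Lemma Vpik_eq (w : traj 1 1 T) : Vpi_k c0 g0 w ord0 = E%:R - (Zcons w ord0 E)%:R.
Proof.
rewrite /Vpi_k assign0 add0r big_ord1 /g0 /= /eend /= mul1n -/E.
have e0 : (0 : R) < E%:R by rewrite ltr0n Epos.
by field; rewrite gt_eqF.
Qed.

Lemma Vmyo_le (w : traj 1 1 T) (z : 'I_1 -> nat) : z ord0 = 0%N ->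
  Vmyo_off c0 S0 g0 w ord0 z <= 0.
Proof.
move=> z0.
have ET : (E < T.+1)%N by rewrite ltnS TE leq_pmull.
apply: le_trans (bigmin_le_cond _ (j := [ffun=> inord E]) _ _) _.
  apply/andP; split.
    apply/forallP => j; rewrite big_ord1 ffunE inordK // Lam_eq //.
  by apply/forallP => j; apply/forallP => i.
rewrite /myo_cost big1 ?add0r; last by move=> j _; rewrite big1 // => i _; rewrite /c0 mul0r.
rewrite big_ord1 big_ord1 ffunE inordK // /g0 /= /eend /= mul1n -/E.
rewrite z0 add0n.
have e0 : (0 : R) < E%:R by rewrite ltr0n Epos.
by rewrite divff ?gt_eqF // subrr mulr0.
Qed.
End Inst.
Section Chain.
Variables (R : realType) (A : finType) (F : seq A -> A -> R).
Hypothesis HF : forall h, \sum_a F h a = 1.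

Definition hist N (w : {ffun 'I_N -> A}) (t : nat) :=
  map w (seq.filter (fun i : 'I_N => (i < t)%N) (enum 'I_N)).

Definition ext N (av : A * {ffun 'I_N -> A}) : {ffun 'I_N.+1 -> A} :=
  [ffun i => if unlift ord_max i is Some j then av.2 j else av.1].
Definition res N (w : {ffun 'I_N.+1 -> A}) : A * {ffun 'I_N -> A} :=
  (w ord_max, [ffun j => w (lift ord_max j)]).

Lemma ext_bij N : bijective (@ext N).
Proof.
exists (@res N).
- case=> a v; rewrite /res /ext /=; congr pair.
  + by rewrite ffunE unlift_none.
  + by apply/ffunP=> j; rewrite !ffunE liftK.
- move=> w; apply/ffunP=> i; rewrite /res /ext ffunE /=.
  by case: unliftP => [j ->|->]; rewrite ?ffunE.
Qed.

Lemma hist_ext N a (v : {ffun 'I_N -> A}) t : (t <= N)%N -> hist (ext (a, v)) t = hist v t.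
Proof.
move=> tN; rewrite /hist enum_ordSr filter_rcons /= ltnNge tN /=.
rewrite filter_map -map_comp; idtac.
rewrite (@eq_map _ _ _ v) // => i /=; rewrite ffunE.
have -> : widen_ord (leqnSn N) i = lift ord_max i by apply: val_inj; rewrite /= /bump leqNgt ltn_ord.
by rewrite liftK.
Qed.

Lemma chain N : \sum_(w : {ffun 'I_N -> A}) \prod_(t < N) F (hist w t) (w t) = 1.
Proof.
elim: N => [|N IH].
  rewrite (eq_bigr (fun _ => 1)) => [|w _]; last by rewrite big_ord0.
  by rewrite sumr_const card_ffun card_ord expn0.
rewrite (reindex (@ext N)) /=; last by apply: onW_bij; apply: ext_bij.
rewrite (eq_bigr (fun p => \prod_(t < N.+1) F (hist (ext (p.1, p.2)) t) (ext (p.1, p.2) t))); last by case.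
rewrite -(pair_big xpredT xpredT (fun a v => \prod_(t < N.+1) F (hist (ext (a, v)) t) (ext (a, v) t))) /=.
rewrite exchange_big /= -[RHS]IH; apply: eq_bigr => v _.
under eq_bigr => a _ do rewrite big_ord_recr /=.
have E : forall a, \prod_(i < N) F (hist (ext (a, v)) i) (ext (a, v) (widen_ord (leqnSn N) i)) = \prod_(t < N) F (hist v t) (v t).
  move=> a; apply: eq_bigr => t _.
  rewrite hist_ext; last by apply: ltnW.
  rewrite /ext ffunE.
  have -> : widen_ord (leqnSn N) t = lift ord_max t by apply: val_inj; rewrite /= /bump leqNgt ltn_ord.
  by rewrite liftK.
under eq_bigr => a _ do rewrite E.
rewrite -mulr_sumr.
have -> : \sum_a F (hist (ext (a, v)) N) (ext (a, v) ord_max) = 1.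
  rewrite -(HF (hist v N)); apply: eq_bigr => a _.
  by rewrite hist_ext // /ext ffunE unlift_none.
by rewrite mulr1.
Qed.
End Chain.
Lemma pow_bound (R : realType) (alpha C : R) : alpha < 1 ->
  exists T0 : nat, forall T : nat, (T0 <= T)%N -> 4 * C * T%:R `^ alpha <= T%:R.
Proof.
move=> a1.
have [C0|C0] := lerP C 0.
  exists 0%N => T _.
  have := powR_ge0 T%:R alpha; have : (0:R) <= T%:R by [].
  move=> h1 h2; nra.
set b := 1 - alpha.
have b0 : 0 < b by rewrite /b subr_gt0.
set M := (4 * C) `^ b^-1.
have M0 : 0 <= M by apply: powR_ge0.
exists (Num.bound M) => T hT.
have MT : M <= T%:R.
  apply: le_trans (ltW (archi_boundP M0)) _; by rewrite ler_nat.
have h1 : 4 * C <= T%:R `^ b.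
  have -> : 4 * C = M `^ b.
    rewrite /M -powRrM mulVf ?gt_eqF // powRr1 //; lra.
  apply: ge0_ler_powR => //; first exact: ltW.
  all: try by rewrite nnegrE.
have h2 : T%:R `^ b * T%:R `^ alpha = T%:R.
  rewrite -powRD; last by rewrite /b subrK oner_eq0.
  by rewrite /b subrK powRr1.
have := powR_ge0 T%:R alpha => h3.
rewrite -[X in _ <= X]h2; apply: ler_wpM2r => //.
Qed.
Theorem proposition1 (R : realType) :
  exists (m n K : nat) (c : 'I_n -> 'I_m -> R) (S : 'I_n -> 'I_m -> bool)
         (p : 'I_n -> R) (rho : 'I_K -> 'I_m -> R)
         (g : 'I_K -> 'I_m -> R -> R) (L : R),
    instance_ok p rho g L /\
    forall pol : policy R m n,
      valid_policy K S pol ->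
      myopic_vanishing_regret c S p g pol ->
      exists (cst : R) (T0 : nat), 0 < cst /\
        forall T : nat, (K %| T)%N -> (T0 <= T)%N ->
          cst * T%:R <= exp_regret c S p g T pol.
Proof.
exists 1%N, 1%N, 2%N, (@c0 R), S0, (@p0 R),
  (fun k _ => if (k == 0 :> nat) then 1 else 0), (@g0 R), 2.
split.
  rewrite /instance_ok; split; first by [].
  split; first by move=> j; rewrite /p0 ler01.
  split; first by rewrite big_ord1.
  split; first by move=> k i; case: ifP => _; apply/andP; split; lra.
  split; first by lra.
  split; first by move=> k i; rewrite /g0; case: (k == 0 :> nat); rewrite ?subrr ?mulr0.
  split; first by move=> k i x /andP[x0 x1]; rewrite /g0; case: ifP => _; lra.
  split.
    move=> k i x y t _ _ _; rewrite /g0; case: ifP => _;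
    rewrite le_eqVlt; apply/orP; left; apply/eqP; ring.
  move=> k i x y _ _; rewrite /g0; case: ifP => _.
    have -> : 1 - x - (1 - y) = - (x - y) by ring.
    rewrite normrN; have := normr_ge0 (x - y); lra.
  have -> : 2 * x - 2 * y = 2 * (x - y) by ring.
  by rewrite normrM ger0_norm.
move=> pol Hval [alpha [C [T1 [a0 [a1 HM]]]]].
have [T2 HT2] := pow_bound C a1.
exists (1/4), (maxn (maxn T1 T2) 2); split; first by lra.
move=> T HT; rewrite !geq_max => /andP[/andP[HT1 HT2'] HT0].
have Tpos : (0 < T)%N := ltnW HT0.
set E := elen 2 T.
have Psum : \sum_(w : traj 1 1 T) prob (p0 R) pol w = 1.
  rewrite /prob; apply: (chain (F := fun h (x : 'I_1 * option 'I_1) => p0 R x.1 * pol T h x.1 x.2)) => h.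
  transitivity (\sum_(j : 'I_1) \sum_(a : option 'I_1) p0 R j * pol T h j a).
    by rewrite pair_big; apply: eq_bigr => [[j a]].
  rewrite big_ord1 -mulr_sumr.
  by have [_ [-> _]] := Hval T h ord0 HT; rewrite /p0 mulr1.
have Pge0 : forall w : traj 1 1 T, 0 <= prob (p0 R) pol w.
  move=> w; apply: prodr_ge0 => t _; apply: mulr_ge0; first by rewrite /p0 ler01.
  by have [H _] := Hval T (history w t) (w t).1 HT; apply: H.
have Zp0 : forall w : traj 1 1 T, [forall i, Zprev w (ord0 : 'I_2) i == (fun _ => 0%N) i].
  by move=> w; apply/forallP => i; rewrite /Zprev /estart mul0n Zcons0.
have Pz1 : Pz (p0 R) T pol ord0 (fun _ => 0%N) = 1.
  rewrite /Pz; transitivity (\sum_(w : traj 1 1 T) prob (p0 R) pol w); last exact: Psum.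
  by apply: eq_bigl => w; rewrite Zp0.
have HM0 := HM T HT HT1 ord0 (fun _ => 0%N).
rewrite Pz1 ltr01 /cond_myo_regret Pz1 divr1 in HM0.
have HM1 := HM0 isT.
have HM2 : \sum_(w : traj 1 1 T) prob (p0 R) pol w * (Vpi_k (c0 R) (g0 (R:=R)) w ord0 - Vmyo_off (c0 R) S0 (g0 (R:=R)) w ord0 (Zprev w (ord0 : 'I_2))) <= C * T%:R `^ alpha.
  apply: le_trans _ HM1; rewrite le_eqVlt; apply/orP; left; apply/eqP.
  by apply: eq_bigl => w; rewrite Zp0.
set D := fun w : traj 1 1 T => Vpi_k (c0 R) (g0 (R:=R)) w ord0 - Vmyo_off (c0 R) S0 (g0 (R:=R)) w ord0 (Zprev w (ord0 : 'I_2)).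
have Dge : forall w : traj 1 1 T, E%:R - D w <= Vpi (c0 R) (g0 (R:=R)) w - Voff (c0 R) S0 (g0 (R:=R)) w.
  move=> w; rewrite /D Vpik_eq //.
  have := @Vmyo_le R T HT Tpos w (Zprev w (ord0 : 'I_2)).
  rewrite /Zprev /estart mul0n Zcons0 => /(_ erefl) h1.
  have := @Vpi_ge R T HT Tpos w; have := @Voff_le R T HT w.
  rewrite -/E; lra.
have Hreg : E%:R - C * T%:R `^ alpha <= exp_regret (c0 R) S0 (p0 R) (g0 (R:=R)) T pol.
  apply: le_trans (_ : \sum_(w : traj 1 1 T) prob (p0 R) pol w * (E%:R - D w) <= _).
    rewrite (eq_bigr (fun w => E%:R * prob (p0 R) pol w - prob (p0 R) pol w * D w)); last first.
      by move=> w _; rewrite mulrBr mulrC.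
    rewrite sumrB -mulr_sumr Psum mulr1 lerD2l lerN2.
    exact: HM2.
  by apply: ler_sum => w _; apply: ler_wpM2l; [exact: Pge0 | exact: Dge].
have H4 := HT2 T HT2'.
have TE2 : T%:R = 2 * E%:R :> R.
  by rewrite -natrM /E /elen mulnC divnK.
lra.
Qed.
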